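(* Let $G$ be an abelian group and let $Z$ be a finite multiset of elements of $G$ with $\dim(Z)\geqslant1$. Set $K(Z)=|Z|/\dim(Z)$. Then $$|Z|\geqslant\frac{K(Z)}{2(2+\log_2K(Z))}\cdot\log_2|\Sigma(Z)|.$$
   Context: $|Z|$ is the size of $Z$ counted with multiplicity. $\Sigma(Z)=\{\sum_{z\in Z'}z:Z'\subseteq Z\}$, where $Z'$ ranges over sub-multisets of $Z$. A (multi)set is dissociated if any two of its sub-multisets with equal sums are equal. $\dim(Z)$ is the size of the largest dissociated sub-multiset of $Z$. *)

(* Defs.v *)
From mathcomp Require Import all_boot all_order all_algebra.
From Stdlib Require Import Reals.
Set Implicit Arguments. Unset Strict Implicit. Unset Printing Implicit Defensive.
Import GRing.Theory.

(* A finite multiset of elements of G is represented by a sequence Z;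
   its sub-multisets are (up to permutation) the sequences  mask m Z. *)

Section Defs.
Variable G : zmodType.
Local Open Scope ring_scope.

Definition msum (W : seq G) : G := \sum_(x <- W) x.

Definition dissociated (W : seq G) : bool :=
  [forall m1 : (size W).-tuple bool, forall m2 : (size W).-tuple bool,
    (msum (mask m1 W) == msum (mask m2 W)) ==> perm_eq (mask m1 W) (mask m2 W)].

Definition dimZ (Z : seq G) : nat :=
  \max_(t : (size Z).-tuple bool | dissociated (mask t Z)) size (mask t Z).

Definition Sigma (Z : seq G) : seq G :=
  undup [seq msum (mask t Z) | t : (size Z).-tuple bool].

End Defs.

Definition log2 (x : R) : R := (ln x / ln 2)%R.

(* Main.v *)
Require Import Defs.
From mathcomp Require Import all_boot all_order all_algebra.
From Stdlib Require Import Reals.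
From Stdlib Require Import Lra.
From mathcomp Require Import zify.
Import ssrnat.

Module Helpers.
Set Implicit Arguments. Unset Strict Implicit. Unset Printing Implicit Defensive.
Import GRing.Theory.

Section Pajor.
Variable X : finType.
Implicit Types (F : {set {set X}}) (A S T U : {set X}).

Definition shatters F T :=
  [forall U : {set X}, (U \subset T) ==> [exists S in F, S :&: T == U]].
Definition shset F := [set T | shatters F T].

Lemma shattersP F T :
  reflect (forall U, U \subset T -> exists2 S, S \in F & S :&: T = U) (shatters F T).
Proof.
apply: (iffP forallP) => [H U sUT | H U].
  have /implyP/(_ sUT)/existsP [S /andP [SF /eqP E]] := H U.
  by exists S.
apply/implyP => sUT; have [S SF E] := H U sUT; apply/existsP; exists S.
by rewrite SF E eqxx.
Qed.

Lemma shatters_sub F F' T : F \subset F' -> shatters F T -> shatters F' T.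
Proof.
move=> sFF' /shattersP H; apply/shattersP => U sUT.
have [S SF E] := H U sUT; exists S => //; exact: (subsetP sFF').
Qed.

Lemma shatters_notin F T a :
  (forall S, S \in F -> a \notin S) -> shatters F T -> a \notin T.
Proof.
move=> Ha /shattersP H; apply/negP => aT.
have [S SF E] := H T (subxx T).
have : a \in S :&: T by rewrite E.
by rewrite inE (negbTE (Ha S SF)).
Qed.

Lemma pajor k : forall A F, #|A| <= k -> (forall S, S \in F -> S \subset A) ->
  #|F| <= #|shset F|.
Proof.
elim: k => [|k IH] A F.
  rewrite leqn0 cards_eq0 => /eqP -> sub.
  have sF : F \subset [set set0].
    by apply/subsetP => S /sub; rewrite subset0 inE.
  case: (set_0Vmem F) => [-> | [S0 S0F]]; first by rewrite cards0.
  apply: (leq_trans (subset_leq_card sF)); rewrite cards1 card_gt0.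
  apply/set0Pn; exists set0; rewrite inE; apply/shattersP => U.
  rewrite subset0 => /eqP ->; exists S0 => //; exact: setI0.
move=> cA sub.
case: (set_0Vmem A) => [A0 | [a aA]].
  by apply: (IH A) => //; rewrite A0 cards0.
pose B := [set S : {set X} | a \in S].
pose F0 := F :\: B.
pose F1 := (fun S => S :\ a) @: (F :&: B).
have cA' : #|A :\ a| <= k.
  by move: cA; rewrite (cardsD1 a A) aA add1n ltnS.
have sub0 : forall S, S \in F0 -> S \subset A :\ a.
  move=> S; rewrite !inE => /andP [aS SF]; apply/subsetP => x xS.
  rewrite !inE (subsetP (sub S SF)) // andbT; apply: contraNneq aS => <-.
  exact: xS.
have sub1 : forall S, S \in F1 -> S \subset A :\ a.
  move=> S /imsetP [S' ]; rewrite !inE => /andP [S'F aS'] ->.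
  by apply: setSD; apply: sub.
have IH0 := IH _ F0 cA' sub0.
have IH1 := IH _ F1 cA' sub1.
have cF : #|F| = #|F0| + #|F1|.
  rewrite /F1 card_in_imset; first by rewrite addnC cardsID.
  move=> S1 S2; rewrite !inE => /andP [_ a1] /andP [_ a2] E.
  by rewrite -(setD1K a1) -(setD1K a2) E.
have n0 : forall T, T \in shset F0 -> a \notin T.
  move=> T; rewrite inE; apply: shatters_notin => S; rewrite !inE.
  by case/andP.
have n1 : forall T, T \in shset F1 -> a \notin T.
  move=> T; rewrite inE; apply: shatters_notin => S /imsetP [S' _ ->].
  by rewrite !inE eqxx.
have sF0 : F0 \subset F by apply: subsetDl.
pose I := (fun T => a |: T) @: (shset F0 :&: shset F1).
have cI : #|I| = #|shset F0 :&: shset F1|.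
  rewrite card_in_imset // => T1 T2; rewrite !inE => /andP [h1 _] /andP [h2 _] E.
  have a1 : a \notin T1 by apply: n0; rewrite inE.
  have a2 : a \notin T2 by apply: n0; rewrite inE.
  by rewrite -(setU1K a1) -(setU1K a2) E.
have disj : (shset F0 :|: shset F1) :&: I = set0.
  apply/setP => T; rewrite !inE; apply/negP => /andP [/orP H /imsetP [T' _ ET]].
  have : a \notin T by case: H => H; [apply: n0 | apply: n1]; rewrite inE.
  by rewrite ET setU11.
have sU : (shset F0 :|: shset F1) :|: I \subset shset F.
  apply/subsetP => T; rewrite !inE => /orP [/orP [H|H] | /imsetP [T' ]].
  - exact: shatters_sub H.
  - have aT : a \notin T by apply: n1; rewrite inE.
    move/shattersP: H => H; apply/shattersP => U sUT.
    have [S' /imsetP [S SB ->] E] := H U sUT.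
    exists S; first by move: SB; rewrite inE => /andP [].
    rewrite -E; apply/setP => x; rewrite !inE.
    by case: (x =P a) => [-> | _]; rewrite ?(negbTE aT) ?andbF.
  - rewrite !inE => /andP [H0 H1] ->.
    have aT : a \notin T' by apply: n0; rewrite inE.
    move/shattersP: H0 => H0; move/shattersP: H1 => H1.
    apply/shattersP => U sU.
    case aU: (a \in U).
      have sU' : U :\ a \subset T'.
        apply/subsetP => x; rewrite !inE => /andP [xa xU].
        by move: (subsetP sU x xU); rewrite !inE (negbTE xa).
      have [S' /imsetP [S SB ->] E] := H1 _ sU'.
      move: SB; rewrite !inE => /andP [SF aS].
      exists S => //; apply/setP => x; move/setP: E => /(_ x); rewrite !inE.
      by case: (x =P a) => [-> | _] /=; rewrite ?aS ?aU ?andbT.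
    have sU' : U \subset T'.
      apply/subsetP => x xU; move: (subsetP sU x xU); rewrite !inE.
      by case: (x =P a) => [xa | ] //; rewrite xa aU in xU.
    have [S SF0 E] := H0 _ sU'.
    move: (SF0); rewrite !inE => /andP [aS SF].
    exists S => //; apply/setP => x; move/setP: E => /(_ x); rewrite !inE.
    by case: (x =P a) => [-> | _] /=; rewrite ?(negbTE aS) ?aU.
apply: (leq_trans _ (subset_leq_card sU)).
rewrite cardsU disj cards0 subn0 cI -(leq_add2r 0) addn0.
rewrite [X in _ <= X]addn0 -[X in _ <= X]addn0.
have := cardsUI (shset F0) (shset F1).
move=> E; rewrite cF; apply: (leq_trans (leq_add IH0 IH1)); rewrite -E.
by rewrite !addn0.
Qed.
End Pajor.

Lemma pow2_sum_lt k m : \sum_(j < m | j < k) 2 ^ j < 2 ^ k.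
Proof.
suff H : \sum_(j < m | j < k) 2 ^ j < 2 ^ (minn m k).
  apply: (leq_trans H); rewrite leq_exp2l //; exact: geq_minr.
elim: m => [|m IH]; first by rewrite big_ord0 expn_gt0.
rewrite big_mkcond big_ord_recr /= -big_mkcond /=.
case: (ltnP m k) => mk.
  have -> : minn m.+1 k = m.+1 by apply/minn_idPl.
  have e : minn m k = m by apply/minn_idPl/ltnW.
  by rewrite e in IH; rewrite expnS mul2n -addnn ltn_add2r.
have -> : minn m.+1 k = k by apply/minn_idPr/(leq_trans mk).
have e : minn m k = k by apply/minn_idPr.
by rewrite e in IH; rewrite addn0.
Qed.

Fixpoint expand (t m : bitseq) : bitseq :=
  if t is b :: t' then
    (if b then head false m :: expand t' (behead m) else false :: expand t' m)
  else [::].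

Lemma mask_mask (T : Type) (t : bitseq) : forall (s : seq T) m,
  mask m (mask t s) = mask (expand t m) s.
Proof.
elim: t => [|b t IH] s m; first by case: s => [|x s]; rewrite /= ?mask0.
case: s => [|x s]; first by rewrite !mask0.
case: b => /=; last by rewrite IH.
case: m => [|c m] /=; last by rewrite IH.
by rewrite -IH.
Qed.

Lemma expand_sub t : forall m i, nth false (expand t m) i -> nth false t i.
Proof.
elim: t => [|b t IH] m [|i] //=; case: b => //= H; exact: IH H.
Qed.

Lemma eq_mask_nth (T : Type) (s : seq T) : forall m1 m2,
  (forall i, i < size s -> nth false m1 i = nth false m2 i) ->
  mask m1 s = mask m2 s.
Proof.
elim: s => [|x s IH] m1 m2 H; first by rewrite !mask0.
have H' : forall i, i < size s -> nth false (behead m1) i = nth false (behead m2) i.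
  move=> i ilt; have := H i.+1 ilt.
  by case: m1 {H} => [|b1 m1]; case: m2 => [|b2 m2] /=; rewrite ?nth_nil.
have h0 := H 0 isT.
clear H.
case: m1 h0 H' => [|b1 m1]; case: m2 => [|b2 m2] //= h0 H'.
- by rewrite -h0 /= -(IH [::] m2 H').
- by rewrite h0 /= (IH m1 [::] H').
- by rewrite h0 (IH m1 m2 H').
Qed.

Section Group.
Variable G : zmodType.
Variable Z : seq G.
Local Notation n := (size Z).
Local Notation r := (tnth (in_tuple Z)).

Definition sumS (S : {set 'I_n}) : G := \big[@GRing.add G/@GRing.zero G]_(i in S) r i.
Definition code (S : {set 'I_n}) : nat := \sum_(i in S) 2 ^ (val i).
Definition minrep (S : {set 'I_n}) : bool :=
  [forall S', (sumS S' == sumS S) ==> (code S <= code S')].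
Definition Fam := [set S | minrep S].

Lemma msum_mask (m : bitseq) : msum (mask m Z) = sumS [set i : 'I_n | nth false m i].
Proof.
rewrite /msum big_mask /sumS; apply: eq_bigl => i; by rewrite inE andbT.
Qed.

Lemma Sigma_le : size (Sigma Z) <= #|Fam|.
Proof.
rewrite cardE -(size_map sumS).
apply: uniq_leq_size; first exact: undup_uniq.
move=> x; rewrite mem_undup => /mapP [t _ ->].
rewrite msum_mask; set S0 := [set i | _].
case: (@arg_minnP _ S0 (fun S => sumS S == sumS S0) code (eqxx (sumS S0))) => S /eqP ES Hmin.
rewrite -ES; apply: map_f; rewrite mem_enum inE.
apply/forallP => S'; apply/implyP => /eqP E; apply: Hmin; by rewrite E ES.
Qed.

Definition idx_dissoc (T : {set 'I_n}) :=
  forall U V : {set 'I_n}, U \subset T -> V \subset T -> sumS U = sumS V -> U = V.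

Lemma key (T U V : {set 'I_n}) (i0 : 'I_n) :
  shatters Fam T -> U \subset T -> V \subset T -> U :&: V = set0 ->
  sumS U = sumS V -> i0 \in U -> (forall j, j \in V -> val j < val i0) -> False.
Proof.
move=> /shattersP sh sUT sVT UV0 EUV i0U ltV.
have [S SF EST] := sh U sUT.
have sUS : U \subset S by rewrite -EST subsetIl.
have VS0 : S :&: V = set0.
  apply/setP => x; rewrite !inE; apply/negP => /andP [xS xV].
  have : x \in S :&: T by rewrite inE xS (subsetP sVT).
  rewrite EST => xU.
  have : x \in U :&: V by rewrite inE xU xV.
  by rewrite UV0 inE.
pose S' := (S :\: U) :|: V.
have S'V : S' :&: V = V by apply/setIidPr; apply: subsetUr.
have S'mV : S' :\: V = S :\: U.
  apply/setP => x; rewrite !inE.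
  case xV: (x \in V) => /=; last by rewrite orbF.
  have : x \notin S :&: V by rewrite VS0 inE.
  by rewrite inE xV andbT => /negbTE ->; rewrite andbF.
have SU : S :&: U = U by apply/setIidPr.
have sum1 : sumS S = GRing.add (sumS U) (sumS (S :\: U)) by rewrite /sumS (big_setID U) SU.
have sum2 : sumS S' = GRing.add (sumS V) (sumS (S :\: U)) by rewrite /sumS (big_setID V) S'V S'mV.
have code1 : code S = code U + code (S :\: U) by rewrite /code (big_setID U) SU.
have code2 : code S' = code V + code (S :\: U) by rewrite /code (big_setID V) S'V S'mV.
move: SF; rewrite inE => /forallP /(_ S') /implyP.
rewrite sum1 sum2 EUV eqxx => /(_ isT).
rewrite code1 code2 leq_add2r.
have cU : 2 ^ (val i0) <= code U.
  by rewrite /code (bigD1 i0) //= leq_addr.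
have cV : code V < 2 ^ (val i0).
  apply: leq_trans (pow2_sum_lt (val i0) n).
  rewrite /code big_mkcond [X in _ < X.+1]big_mkcond /= ltnS.
  apply: leq_sum => j _; case: ifP => // jV; by rewrite ltV.
move=> H; have := leq_ltn_trans (leq_trans cU H) cV; by rewrite ltnn.
Qed.

Lemma shatter_dissoc T : T \in shset Fam -> idx_dissoc T.
Proof.
rewrite inE => sh U V sUT sVT E.
apply/eqP/negPn/negP => neq.
pose U' := U :\: V. pose V' := V :\: U.
have sU' : U' \subset T by apply: subset_trans sUT; apply: subsetDl.
have sV' : V' \subset T by apply: subset_trans sVT; apply: subsetDl.
have d0 : U' :&: V' = set0.
  by apply/setP => x; rewrite !inE; case: (x \in U); case: (x \in V); rewrite ?andbF.
have d0' : V' :&: U' = set0 by rewrite setIC.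
have EUI : U :&: V = V :&: U by rewrite setIC.
have E' : sumS U' = sumS V'.
  move: E; rewrite /sumS (big_setID V) [in RHS](big_setID U) -EUI.
  by move/addrI.
have ne : U' :|: V' != set0.
  apply: contra neq => /eqP H; rewrite eqEsubset; apply/andP; split.
    apply/subsetP => x xU; apply/negPn/negP => xV.
    have : x \in U' :|: V' by rewrite !inE xU xV.
    by rewrite H inE.
  apply/subsetP => x xV; apply/negPn/negP => xU.
  have : x \in U' :|: V' by rewrite !inE xU xV orbT.
  by rewrite H inE.
case/set0Pn: ne => j0 j0W.
case: (@arg_maxnP _ j0 (fun i => i \in U' :|: V') (fun i : 'I_n => val i) j0W) => i0 i0W Hmax.
move: (i0W); rewrite inE => /orP [i0U | i0V].
- apply: (key sh sU' sV' d0 E' i0U) => j jV.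
  have hj : val j <= val i0 by apply: Hmax; rewrite inE jV orbT.
  rewrite ltn_neqAle hj andbT.
  apply/negP => /eqP /val_inj ji0.
  have : j \in U' :&: V' by rewrite inE jV ji0 i0U.
  by rewrite d0 inE.
- apply: (key sh sV' sU' d0' (esym E') i0V) => j jU.
  have hj : val j <= val i0 by apply: Hmax; rewrite inE jU.
  rewrite ltn_neqAle hj andbT.
  apply/negP => /eqP /val_inj ji0.
  have : j \in U' :&: V' by rewrite inE jU ji0 i0V.
  by rewrite d0 inE.
Qed.

Lemma dissoc_dim T : idx_dissoc T -> #|T| <= dimZ Z.
Proof.
move=> H.
pose t := [tuple (i \in T) | i < n].
have nt : forall i : 'I_n, nth false t i = (i \in T).
  by move=> i; rewrite -tnth_nth tnth_mktuple.
have szt : size (mask t Z) = #|T|.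
  rewrite size_mask ?size_tuple //= count_map cardE /enum_mem size_filter.
  by rewrite (@eq_filter _ _ predT) ?filter_predT.
rewrite -szt /dimZ; apply: (leq_bigmax_cond t).
apply/forallP => m1; apply/forallP => m2; apply/implyP => /eqP E.
suff -> : mask m1 (mask t Z) = mask m2 (mask t Z) by apply: perm_refl.
rewrite !mask_mask; move: E; rewrite !mask_mask !msum_mask => E.
have sub : forall m : bitseq, [set i : 'I_n | nth false (expand t m) i] \subset T.
  move=> m; apply/subsetP => i; rewrite inE => /expand_sub; by rewrite nt.
have := H _ _ (sub m1) (sub m2) E => /setP Es.
apply: eq_mask_nth => i ilt.
by have := Es (Ordinal ilt); rewrite !inE.
Qed.

End Group.

Lemma card_le n d : #|[set T : {set 'I_n} | #|T| <= d]| = \sum_(k < d.+1) 'C(n, k).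
Proof.
elim: d => [|d IH].
  rewrite big_ord1 -[n in 'C(n, _)]card_ord -card_draws.
  by apply: eq_card => T; rewrite !inE leqn0.
rewrite big_ord_recr -IH -[n in 'C(n, _)]card_ord -card_draws.
rewrite -(cardsID [set T : {set 'I_n} | #|T| <= d] [set T : {set 'I_n} | #|T| <= d.+1]).
congr (_ + _); apply: eq_card => T; rewrite !inE.
  by case: (ltngtP #|T| d.+1) => h; rewrite ?h; lia.
by case: (ltngtP #|T| d.+1) => h; rewrite ?h; lia.
Qed.

Lemma count_bound n d : d <= n ->
  #|[set T : {set 'I_n} | #|T| <= d]| * (d ^ d * n ^ (n - d)) <= (n + d) ^ n.
Proof.
move=> dn; rewrite card_le big_distrl /= expnDn.
rewrite (big_ord_widen n.+1 (fun k => 'C(n, k) * (d ^ d * n ^ (n - d)))) ?ltnS //.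
rewrite big_mkcond /=; apply: leq_sum => k _.
case: ifP => // kd; rewrite ltnS in kd.
apply: leq_mul => //.
have e1 : d ^ d = d ^ k * d ^ (d - k) by rewrite -expnD subnKC.
have e2 : n ^ (n - k) = n ^ (d - k) * n ^ (n - d).
  by rewrite -expnD; congr (_ ^ _); lia.
rewrite e1 e2.
have h : d ^ (d - k) <= n ^ (d - k) by case: (d - k) => [|e] //; rewrite leq_exp2r.
move: h; set A := d ^ k; set B := d ^ (d - k); set C := n ^ (n - d); set D := n ^ (d - k).
move=> h; rewrite [D * C * A]mulnC mulnA; apply: leq_mul => //; exact: leq_mul.
Qed.

Lemma INR_muln a b : INR (a * b)%N = (INR a * INR b)%R.
Proof. by rewrite mulnE mult_INR. Qed.

Lemma INR_expn m k : INR (m ^ k)%N = (INR m ^ k)%R.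
Proof.
elim: k => [|k IH]; first by rewrite expn0.
by rewrite expnS INR_muln IH.
Qed.

Lemma exp_pow_INR x k : (exp x ^ k)%R = exp (INR k * x)%R.
Proof.
elim: k => [|k IH]; first by rewrite /= Rmult_0_l exp_0.
rewrite -tech_pow_Rmult IH -exp_plus S_INR; congr exp; lra.
Qed.

Lemma div_nonneg a b : (0 <= a)%R -> (0 < b)%R -> (0 <= a / b)%R.
Proof. move=> ha hb; apply: Rmult_le_pos => //; left; exact: Rinv_0_lt_compat. Qed.

Lemma ln_le' x y : (0 < x)%R -> (x <= y)%R -> (ln x <= ln y)%R.
Proof.
move=> hx [h|h]; first by left; apply: ln_increasing.
by right; rewrite h.
Qed.

Lemma real_part (n d S C : nat) : (1 <= d)%N -> (d <= n)%N -> (1 <= S)%N -> (S <= C)%N ->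
  (C * (d ^ d * n ^ (n - d)) <= (n + d) ^ n)%N ->
  let K := (INR n / INR d)%R in
  (INR n >= K / (2 * (2 + log2 K)) * log2 (INR S))%R.
Proof.
move=> d1 dn S1 SC hC K.
have dR : (1 <= INR d)%R by apply: (le_INR 1); apply/leP.
have ndR : (INR d <= INR n)%R by apply: le_INR; apply/leP.
have nR : (0 < INR n)%R by lra.
have SR : (1 <= INR S)%R by apply: (le_INR 1); apply/leP.
have SCR : (INR S <= INR C)%R by apply: le_INR; apply/leP.
have hCR : (INR C * (INR d ^ d * INR n ^ (n - d)) <= (INR n + INR d) ^ n)%R.
  move/leP: hC => /le_INR.
  by rewrite INR_muln INR_muln !INR_expn addnE plus_INR.
have K1 : (1 <= K)%R.
  rewrite /K; apply/(Rmult_le_reg_r (INR d)); first lra.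
  rewrite Rmult_1_l /Rdiv Rmult_assoc Rinv_l; lra.
have KdR : (K * INR d = INR n)%R by rewrite /K; field; lra.
(* (n+d)^n <= n^n exp d *)
have e1 : ((INR n + INR d) ^ n = INR n ^ n * (1 + INR d / INR n) ^ n)%R.
  rewrite -Rpow_mult_distr; congr pow; field; lra.
have e2 : ((1 + INR d / INR n) ^ n <= exp (INR d))%R.
  have -> : exp (INR d) = (exp (INR d / INR n) ^ n)%R.
    by rewrite exp_pow_INR; congr exp; field; lra.
  apply: pow_incr; split; last exact: exp_ineq1_le.
  have : (0 <= INR d / INR n)%R by apply: div_nonneg; lra.
  lra.
have e3 : (INR n ^ n = INR n ^ d * INR n ^ (n - d))%R.
  by rewrite -pow_add -addnE subnKC.
have pnd : (0 < INR n ^ (n - d))%R by apply: pow_lt.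
have pd : (0 < INR d ^ d)%R by apply: pow_lt; lra.
have hC2 : (INR C * INR d ^ d <= INR n ^ d * exp (INR d))%R.
  apply: (Rmult_le_reg_r (INR n ^ (n - d))) => //.
  have h := Rmult_le_compat_l (INR n ^ n) _ _ (pow_le _ n (Rlt_le _ _ nR)) e2.
  rewrite -e1 in h.
  apply: (Rle_trans _ (INR C * (INR d ^ d * INR n ^ (n - d)))); first by right; ring.
  apply: (Rle_trans _ _ _ hCR); apply: (Rle_trans _ _ _ h).
  by rewrite e3; right; ring.
have hC3 : (INR C <= K ^ d * exp (INR d))%R.
  apply: (Rmult_le_reg_r (INR d ^ d)) => //.
  have -> : (K ^ d * exp (INR d) * INR d ^ d = (K * INR d) ^ d * exp (INR d))%R.
    by rewrite Rpow_mult_distr; ring.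
  by rewrite KdR.
have Kp : (0 < K)%R by lra.
have lnS : (ln (INR S) <= INR d * ln K + INR d)%R.
  apply: Rle_trans (@ln_le' _ _ _ (Rle_trans _ _ _ SCR hC3)) _; first lra.
  rewrite ln_mult ?ln_pow ?ln_exp //; [lra | apply: pow_lt; lra | apply: exp_pos].
have lK : (0 <= ln K)%R.
  case: (Rle_lt_or_eq_dec _ _ K1) => h; last by rewrite -h ln_1; lra.
  by left; rewrite -ln_1; apply: ln_increasing; lra.
have l2 := ln_lt_2.
have l2p : (0 < ln 2)%R by lra.
have lS0 : (0 <= ln (INR S))%R.
  case: (Rle_lt_or_eq_dec _ _ SR) => h; last by rewrite -h ln_1; lra.
  by left; rewrite -ln_1; apply: ln_increasing; lra.
rewrite /log2.
move: lK l2 l2p lS0 lnS; rewrite /log2.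
set L := ln K. set l := ln 2. set s := ln (INR S) => lK l2 l2p lS0 lnS.
have a0 : (0 < 2 + L / l)%R.
  have : (0 <= L / l)%R by apply: div_nonneg => //; lra.
  lra.
apply: Rle_ge.
have -> : (K / (2 * (2 + L / l)) * (s / l) = (K * s) / (2 * (2 * l + L)))%R.
  field; split; lra.
apply: (Rmult_le_reg_r (2 * (2 * l + L))); first lra.
rewrite /Rdiv Rmult_assoc Rinv_l; last lra.
rewrite Rmult_1_r -KdR.
have : (s <= 2 * INR d * (2 * l + L))%R by nra.
nra.
Qed.

Lemma dim_le (G : zmodType) (Z : seq G) : dimZ Z <= size Z.
Proof.
rewrite /dimZ; apply/bigmax_leqP => t _.
by rewrite size_mask ?size_tuple // -[X in _ <= X](size_tuple t) count_size.
Qed.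

Lemma Sigma_pos (G : zmodType) (Z : seq G) : 0 < size (Sigma Z).
Proof.
have : msum (mask [tuple of nseq (size Z) false] Z) \in Sigma Z.
  by rewrite mem_undup; apply: map_f; rewrite mem_enum.
by case: (Sigma Z).
Qed.

Lemma Sigma_bound (G : zmodType) (Z : seq G) :
  size (Sigma Z) <= #|[set T : {set 'I_(size Z)} | #|T| <= dimZ Z]|.
Proof.
apply: (leq_trans (Sigma_le Z)).
apply: (leq_trans (@pajor _ #|[set: 'I_(size Z)]| [set: 'I_(size Z)] (Fam Z) (leqnn _) _)).
  by move=> S _; apply: subsetT.
apply: subset_leq_card; apply/subsetP => T TF; rewrite inE.
exact: dissoc_dim (shatter_dissoc TF).
Qed.

End Helpers.
Import Helpers.

Theorem proposition5p2 (G : zmodType) (Z : seq G) :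
  (1 <= dimZ Z)%N ->
  let K := (INR (size Z) / INR (dimZ Z))%R in
  (INR (size Z) >= K / (2 * (2 + log2 K)) * log2 (INR (size (Sigma Z))))%R.
Proof.
move=> d1.
apply: (@real_part (size Z) (dimZ Z) (size (Sigma Z))
          #|[set T : {set 'I_(size Z)} | #|T| <= dimZ Z]|).
- exact: d1.
- exact: dim_le.
- exact: Sigma_pos.
- exact: Sigma_bound.
- apply: count_bound; exact: dim_le.
Qed.
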